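(* Let $E$ be a countable set, $\sigma$ a random virtual permutation of $E$ with central law, $(\lambda_k)_{k\ge1}$ its sequence of asymptotic cycle lengths, and $C = L \cup \bigcup_k C_k$ the random space built from $(\lambda_k)$ as in the context. Define the random metric $D$ on $C$ by: $D(x,y) = \inf\{|a| : x - y \equiv a \pmod{\lambda_k}\}$ if $x, y \in C_k$ for the same $k$; $D(x,y) = 0$ if $x = y \in L$; $D(x,y) = 1$ otherwise. Suppose the probability space supports random variables $(X_x)_{x \in E}$ in $C$ which, conditionally on $(\lambda_k)$, are i.i.d. uniform on $C$, and such that almost surely: $X_x \in L$ iff $x$ is a fixed point of $\sigma$; for distinct $x,y$, $x \sim_\sigma y$ iff $X_x,X_y$ lie on the same circle $C_k$, in which case $\lambda(x)=\lambda(y)=\lambda_k$; and for distinct $x \sim_\sigma y$, $\delta(x,y) = X_y - X_x$ modulo $\lambda(x)$. Let $K := \{X_x : x \in E\}$. Then the map $x \mapsto X_x$ is almost surely a bijective isometry from $(E,d)$ onto $(K,D)$.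
   Context: A virtual permutation of $E$ is a family $\sigma=(\sigma_I)$ indexed by finite $I\subset E$, $\sigma_I$ a permutation of $I$, with $\sigma_I(x)=\sigma_J^m(x)$ ($m\ge1$ minimal with $\sigma_J^m(x)\in I$) for $I\subset J$; the space carries the $\sigma$-algebra generated by $\sigma\mapsto\sigma_J$. $x\sim_\sigma y$ iff $x,y$ lie in a common cycle of $\sigma_I$ for some (equivalently every) finite $I\ni x,y$; $\mathcal{C}_\sigma(x)$ is its class; $x$ is a fixed point if $\sigma_I(x)=x$ for all finite $I\ni x$. A law is central if each $\sigma_I$ has conjugation-invariant law. Under a central law: $\lambda(x)$ is the $L^1$ limit as $|I|\to\infty$ of $|I\cap\mathcal{C}_\sigma(x)|/|I|$; $\lambda_k$ is the supremum of $\min_{j\le k}\lambda(x_j)$ over pairwise non-equivalent $x_1,\dots,x_k$ (a.s. non-increasing with sum $\le1$); for $x\sim_\sigma y$, $k_I(x,y)\in\{0,\dots,|I\cap\mathcal{C}_\sigma(x)|-1\}$ satisfies $\sigma_I^{k_I(x,y)}(x)=y$, $\Delta(x,y)$ is the $L^1$ limit of $k_I(x,y)/|I|$, $\delta(x,y)$ its class mod $\lambda(x)$. The metric $d$ on $E$: $d(x,y)=1$ if $x\not\sim_\sigma y$, and $d(x,y)=\inf\{|a|: a\equiv\delta(x,y) \bmod \lambda(x)\}$ if $x\sim_\sigma y$. The space $C$: for each $k$ with $\lambda_k>0$ a circle $C_k$ of perimeter $\lambda_k$, pairwise disjoint, with $y-x\in\mathbb{R}/\lambda_k\mathbb{Z}$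 the counterclockwise arc length from $x$ to $y$; $L$ a disjoint segment of length $1-\sum_k\lambda_k$ (empty if $0$); uniform on $C$ means the probability measure giving arcs and subsegments their length. *)

(* Defs.v *)
From HB Require Import structures.
From mathcomp Require Import all_boot all_order all_algebra.
From mathcomp Require Import finmap.
From mathcomp Require Import all_classical all_reals all_analysis.
Set Implicit Arguments. Unset Strict Implicit. Unset Printing Implicit Defensive.
Import Order.TTheory GRing.Theory Num.Theory.
Local Open Scope classical_set_scope.
Local Open Scope ring_scope.
Local Open Scope fset_scope.

(* A virtual permutation is encoded as a family  s : {fset E} -> E -> E *)
(* where s I is a permutation of I (extended by the identity outside I). *)
Definition is_vperm (E : choiceType) (s : {fset E} -> E -> E) : Prop :=
  (forall I : {fset E}, forall x, x \in I -> s I x \in I) /\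
  (forall I : {fset E}, {in I &, injective (s I)}) /\
  (forall I : {fset E}, forall x, x \notin I -> s I x = x) /\
  (forall (I J : {fset E}), I `<=` J -> forall x, x \in I ->
     exists m : nat, (0 < m)%N /\ iter m (s J) x = s I x /\
       forall m' : nat, (0 < m')%N -> (m' < m)%N -> iter m' (s J) x \notin I).

Definition vequiv (E : choiceType) (s : {fset E} -> E -> E) (x y : E) : Prop :=
  exists I : {fset E}, [/\ x \in I, y \in I & exists n : nat, iter n (s I) x = y].

Definition vfixed (E : choiceType) (s : {fset E} -> E -> E) (x : E) : Prop :=
  forall I : {fset E}, x \in I -> s I x = x.

Definition kI (E : choiceType) (s : {fset E} -> E -> E) (I : {fset E}) (x y : E) : nat :=
  find (fun n => iter n (s I) x == y) (iota 0 #|` I|).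

Definition card_class (E : choiceType) (s : {fset E} -> E -> E) (I : {fset E}) (x : E)
  : nat := #|` [fset y in I | `[< vequiv s x y >]]|.

Definition dmod (R : realType) (a l : R) : R :=
  inf [set `|a - n%:~R * l| | n in [set: int]].

Definition lamk (R : realType) (E : Type) (eqv : E -> E -> Prop) (lam : E -> R)
  (k : nat) : R :=
  sup [set inf (range (lam \o f)) | f in
        [set f : 'I_k -> E | forall i j : 'I_k, i != j -> ~ eqv (f i) (f j)]].

Definition vdist (R : realType) (E : choiceType) (s : {fset E} -> E -> E)
  (lam : E -> R) (Delta : E -> E -> R) (x y : E) : R :=
  if `[< vequiv s x y >] then dmod (Delta x y) (lam x) else 1.

(* The space C.  A point of C is encoded as a pair (k, t) : nat * R:     *)
(*  - (0, t), 0 <= t < 1 - sum_k lambda_k  : the point t of the segment L*)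
(*  - (k, t), k >= 1, 0 <= t < lambda_k    : the point of the circle C_k *)
(*    at counterclockwise arc length t from a base point.                *)
(* Lam k = lambda_k for k >= 1 (Lam 0 is unused).                        *)
Definition Lmass (R : realType) (Lam : nat -> R) : \bar R :=
  (1%:E - \sum_(1 <= k <oo) (Lam k)%:E)%E.

Definition unifC (R : realType) (Lam : nat -> R) (B : set (nat * R)) : \bar R :=
  (\sum_(1 <= k <oo) (@lebesgue_measure R) [set t : R | (0 <= t)%R /\ (t < Lam k)%R /\ B (k, t)]
   + (@lebesgue_measure R) [set t : R | (0 <= t)%R /\ (t%:E < Lmass Lam)%E /\ B (0%N, t)])%E.

Definition Cdist (R : realType) (Lam : nat -> R) (p q : nat * R) : R :=
  if (p.1 == q.1) && (p.1 != 0%N) then dmod (p.2 - q.2) (Lam p.1)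
  else if (p == q) && (p.1 == 0%N) then 0 else 1.

Definition Lamk (R : realType) (E : choiceType) (Omega : Type)
  (sigma : Omega -> {fset E} -> E -> E) (lam : E -> Omega -> R) (w : Omega) (k : nat) : R :=
  lamk (vequiv (sigma w)) (fun x => lam x w) k.

Definition lam_generators (R : realType) (Omega : Type) (Lam : Omega -> nat -> R)
  : set (set Omega) :=
  [set G | exists (k : nat) (A : set R), [/\ (1 <= k)%N, measurable A &
           G = (fun w => Lam w k) @^-1` A]].

Definition bij_isometry (E T : Type) (R : realType) (dE : E -> E -> R) (dK : T -> T -> R)
  (K : set T) (f : E -> T) : Prop :=
  set_bij [set: E] K f /\ forall x y, dK (f x) (f y) = dE x y.

(* Main.v *)
Require Import Defs.
From HB Require Import structures.
From mathcomp Require Import all_boot all_order all_algebra.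
From mathcomp Require Import finmap.
From mathcomp Require Import all_classical all_reals all_analysis.
From mathcomp Require Import ring measurable_realfun.
Import Order.TTheory GRing.Theory Num.Theory.
Local Open Scope classical_set_scope.
Local Open Scope ring_scope.

Lemma dmod_shift (R : realType) (a l : R) (m : int) :
  dmod (a + m%:~R * l) l = dmod a l.
Proof.
rewrite /dmod; congr inf; apply/seteqP; split => _ [n _ <-].
  exists (n - m) => //; congr (`|_|); rewrite intrB; ring.
exists (n + m) => //; congr (`|_|); rewrite intrD; ring.
Qed.

Lemma dmod_opp (R : realType) (a l : R) : dmod (- a) l = dmod a l.
Proof.
rewrite /dmod; congr inf; apply/seteqP; split => _ [n _ <-].
  by exists (- n) => //; rewrite -normrN intrN; congr (`|_|); ring.
by exists (- n) => //; rewrite -normrN intrN; congr (`|_|); ring.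
Qed.

Lemma dmod0 (R : realType) (l : R) : dmod 0 l = 0.
Proof.
rewrite /dmod; apply/eqP; rewrite eq_le; apply/andP; split.
  apply: inf_lbound; first by exists 0 => _ [n _ <-].
  by exists 0 => //; rewrite mul0r subr0 normr0.
apply: lb_le_inf; first by exists `|0 - 0 * l|, 0.
by move=> _ [n _ <-].
Qed.
Lemma measurable_ltE (R : realType) (e : \bar R) :
  measurable [set t : R | (t%:E < e)%E].
Proof.
case: e => [r| |].
- rewrite (_ : [set t | _] = `]-oo, r[%classic); first exact: measurable_itv.
  by apply/seteqP; split => t /=; rewrite in_itv /= lte_fin.
- rewrite (_ : [set t | _] = setT) //.
  by apply/seteqP; split => t //= _; rewrite ltry.
- rewrite (_ : [set t | _] = set0) //.
  by apply/seteqP; split => t //=; rewrite ltNge leNye.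
Qed.

Lemma leb_piece (R : realType) (e : \bar R) (a b : R) : a <= b ->
  ((@lebesgue_measure R) [set t : R | (0 <= t)%R /\ (t%:E < e)%E /\ (a <= t)%R /\ (t < b)%R]
    <= (b - a)%:E)%E.
Proof.
move=> ab.
have -> : [set t : R | 0 <= t /\ (t%:E < e)%E /\ a <= t /\ t < b] =
   `[0, +oo[%classic `&` ([set t : R | (t%:E < e)%E] `&` `[a, b[%classic).
  apply/seteqP; split => t /=; rewrite !in_itv /= ?andbT.
    by move=> [t0 [te [ha tb]]]; do !split => //; apply/andP; split.
  by move=> [t0 [te /andP[ha tb]]]; do !split.
apply: (@le_trans _ _ ((@lebesgue_measure R) `[a, b[%classic)).
  apply: le_measure; rewrite ?inE.
  - apply: measurableI; first exact: measurable_itv.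
    apply: measurableI; first exact: measurable_ltE.
    exact: measurable_itv.
  - exact: measurable_itv.
  - by move=> t [_ [_ ?]].
rewrite lebesgue_measure_itv /= lte_fin.
case: ltP => ab'; first by rewrite -EFinD.
by rewrite lee_fin subr_ge0.
Qed.

Definition cell (R : realType) (k : nat) (a b : R) : set (nat * R) :=
  [set p | p.1 = k /\ a <= p.2 /\ p.2 < b].
Arguments cell {R}.

Lemma unifC_ge0 (R : realType) (Lam : nat -> R) B : (0 <= unifC Lam B)%E.
Proof.
rewrite /unifC; apply: adde_ge0; last exact: measure_ge0.
by apply: nneseries_ge0 => n _ _; exact: measure_ge0.
Qed.

Lemma unifC_cell (R : realType) (Lam : nat -> R) (k : nat) (a b : R) : a <= b ->
  (unifC Lam (cell k a b) <= (b - a)%:E)%E.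
Proof.
move=> ab; rewrite /unifC /cell /=.
case: k => [|k].
  rewrite eseries0 ?add0e; last first.
    move=> i i1 _; rewrite (_ : [set t | _] = set0) ?measure0 //.
    apply/seteqP; split => t //= [_ [_ [i0 _]]].
    by rewrite i0 in i1.
  rewrite (_ : [set t | _] = [set t : R | 0 <= t /\ (t%:E < Lmass Lam)%E /\ a <= t /\ t < b]).
    exact: leb_piece.
  by apply/seteqP; split => t /=; [move=> [h1 [h2 [_ h3]]]; split => //; split|move=> [h1 [h2 h3]]; split => //; split].

rewrite [X in (_ + X)%E](_ : _ = 0%E); last first.
  by rewrite (_ : [set t | _] = set0) ?measure0 //; apply/seteqP; split => t //= [_ [_ []]].
rewrite adde0 ereal_series (@nneseriesD1 _ _ k.+1); last by [].
  2: by move=> n _; exact: measure_ge0.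
rewrite eseries0 ?adde0; last first.
  move=> i _ /andP[_ ik]; rewrite (_ : [set t | _] = set0) ?measure0 //.
  by apply/seteqP; split => t //= [_ [_ [i0 _]]]; rewrite i0 eqxx in ik.
rewrite (_ : [set t | _] = [set t : R | 0 <= t /\ (t%:E < (Lam k.+1)%:E)%E /\ a <= t /\ t < b]).
  exact: leb_piece.
by apply/seteqP; split => t /=; rewrite lte_fin; [move=> [h1 [h2 [_ h3]]]; split => //; split|move=> [h1 [h2 h3]]; split => //; split].
Qed.
Section intsc.
Import HBNNSimple.
Lemma int_le_scale d (T : measurableType d) (R : realType)
  (mu : {measure set T -> \bar R}) (f g : T -> \bar R) (c : R) :
  0 < c -> (forall x, (0 <= f x)%E) -> (forall x, (0 <= g x)%E) ->
  (forall x, (f x <= c%:E * g x)%E) ->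
  (\int[mu]_(x in [set: T]) f x <= c%:E * \int[mu]_(x in [set: T]) g x)%E.
Proof.
move=> c0 f0 g0 fg.
rewrite (ge0_integralTE mu f0) (ge0_integralTE mu g0) /=.
apply: ge_ereal_sup => _ [h /= hf <-].
have ci0 : 0 <= c^-1 by rewrite invr_ge0 ltW.
pose h' := scale_nnsfun h ci0.
have -> : sintegral mu h = (c%:E * sintegral mu h')%E.
  have -> : sintegral mu h' = (c^-1%:E * sintegral mu h)%E by rewrite -sintegralrM.
  rewrite muleA -EFinM.
  by rewrite divff ?gt_eqF // mul1e.
rewrite lee_pmul2l ?lte_fin //; apply: ereal_sup_ubound => /=.
exists h' => // x; rewrite /h' /= -[X in (X <= _)%E]mul1e.
have : ((h x)%:E <= c%:E * g x)%E := le_trans (hf x) (fg x).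
move: (g x) (g0 x) => [r| |] // r0.
- rewrite -!EFinM !lee_fin => hr.
  by rewrite mul1r ler_pdivrMl // mulrC.
- by rewrite leey.
Qed.
End intsc.

Lemma measurable_cell (R : realType) (k : nat) (a b : R) : measurable (cell k a b).
Proof.
rewrite (_ : cell k a b = [set k] `*` `[a, b[%classic).
  by apply: measurableX => //; exact: measurable_itv.
apply/seteqP; split => -[k' t] /=; rewrite /cell /= in_itv /=.
  by move=> [-> [-> ->]].
by move=> [-> /andP[-> ->]].
Qed.

Definition cells (R : realType) (N : nat) (n : nat) : set (nat * R) :=
  match @pickle_inv (prod nat int) n with
  | Some (k, j) => cell k (j%:~R / N.+1%:R) ((j + 1)%:~R / N.+1%:R)
  | None => cell 0%N 0 0
  end.
Arguments cells {R}.

Lemma cells_inv (R : realType) (N n : nat) (p : nat * R) : cells N n p ->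
  @pickle_inv (prod nat int) n = Some (p.1, Num.floor (p.2 * N.+1%:R)).
Proof.
rewrite /cells; case: pickle_inv => [[k j]|]; last first.
  by move=> [_ [h1 h2]]; have := lt_le_trans h2 h1; rewrite ltxx.
move=> [<- [h1 h2]]; congr (Some (_, _)); apply/esym/floor_def.
have N0 : (0 : R) < N.+1%:R by rewrite ltr0Sn.
by rewrite -ler_pdivrMr // h1 /= -ltr_pdivlMr.
Qed.

Arguments cells_inv {R N n p}.

Lemma cells_cover (R : realType) (N : nat) (p : nat * R) : exists n, cells N n p.
Proof.
exists (choice.pickle (p.1, Num.floor (p.2 * N.+1%:R))); rewrite /cells pickleK_inv.
have N0 : (0 : R) < N.+1%:R by rewrite ltr0Sn.
have /andP[h1 h2] := floor_itv (p.2 * N.+1%:R).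
by split => //; rewrite ler_pdivrMr // ltr_pdivlMr.
Qed.

Arguments cells_cover {R}.

Lemma cells_bound (R : realType) (g : set (nat * R) -> \bar R) (N n : nat) :
  (forall k a b, a <= b -> (g (cell k a b) <= (b - a)%:E)%E) ->
  (g (cells N n) <= (N.+1%:R^-1)%:E)%E.
Proof.
move=> hg; rewrite /cells; case: pickle_inv => [[k j]|].
  rewrite (le_trans (hg _ _ _ _)) //.
    by rewrite ler_pM2r ?invr_gt0 ?ltr0Sn // ler_int lerDl.
  by rewrite lee_fin -mulrBl -intrB addrAC subrr add0r mul1r.
by rewrite (le_trans (hg _ _ _ _)) // subrr lee_fin invr_ge0.
Qed.

Lemma measurable_cells (R : realType) (N n : nat) : measurable (@cells R N n).
Proof. by rewrite /cells; case: pickle_inv => [[k j]|]; exact: measurable_cell. Qed.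

Lemma diag_negligible d (Omega : measurableType d) (R : realType)
  (P : {measure set Omega -> \bar R}) (PT : (P setT <= 1)%E)
  (Z1 Z2 : Omega -> nat * R) (g : set (nat * R) -> Omega -> \bar R) :
  measurable_fun setT Z1 -> measurable_fun setT Z2 ->
  (forall B w, (0 <= g B w)%E) ->
  (forall k a b w, a <= b -> (g (cell k a b) w <= (b - a)%:E)%E) ->
  (forall B, measurable B -> P (Z1 @^-1` B) = (\int[P]_(w in setT) g B w)%E) ->
  (forall B, measurable B ->
     P (Z1 @^-1` B `&` Z2 @^-1` B) = (\int[P]_(w in setT) (g B w * g B w))%E) ->
  P.-negligible [set w | Z1 w = Z2 w].
Proof.
move=> m1 m2 g0 gb h1 h2.
have mpre (Z : Omega -> nat * R) B : measurable_fun setT Z -> measurable B ->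
    measurable (Z @^-1` B).
  by move=> mZ mB; rewrite -[_ @^-1` _]setTI; exact: mZ.
pose F N n := Z1 @^-1` cells N n `&` Z2 @^-1` cells N n.
have mF N n : measurable (F N n).
  by apply: measurableI; apply: mpre => //; exact: measurable_cells.
pose D1 N := \bigcup_n F N n.
have mD1 N : measurable (D1 N) by exact: bigcupT_measurable.
have PD1 N : (P (D1 N) <= (N.+1%:R^-1)%:E)%E.
  apply: (le_trans (measure_sigma_subadditive P (mF N) (mD1 N) (@subset_refl _ _))).
  rewrite /D1 /F.
  apply: (@le_trans _ _ (\sum_(n <oo) ((N.+1%:R^-1)%:E * P (Z1 @^-1` cells N n)))%E).
    apply: lee_nneseries => [n _ _|n _]; first exact: measure_ge0.
    rewrite h2 ?h1; try exact: measurable_cells.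
    have c0 : (0 : R) < N.+1%:R^-1 by rewrite invr_gt0 ltr0Sn.
    apply: int_le_scale => [|w|w|w]; first exact: c0.
    - exact: mule_ge0.
    - exact: g0.
    - have hb : (g (cells N n) w <= (N.+1%:R^-1)%:E)%E.
        by apply: (@cells_bound R (g^~ w)) => k a b ab; exact: gb.
      exact: (lee_wpmul2r (g0 _ _) hb).
  rewrite nneseriesZl; last by move=> n _; exact: measure_ge0.
  rewrite -measure_semi_bigcup.
  - rewrite -[X in (_ <= X)%E]mule1; apply: lee_wpmul2l.
      by rewrite lee_fin invr_ge0.
    apply: (le_trans _ PT); apply: le_measure; rewrite ?inE //.
    apply: bigcupT_measurable => n.
    by apply: mpre => //; exact: measurable_cells.
  - by move=> n; apply: mpre => //; exact: measurable_cells.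
  - move=> i j _ _ [w [hi hj]].
    have := @pickle_invK (nat * int)%type i; have := @pickle_invK (nat * int)%type j.
    by rewrite (cells_inv hi) (cells_inv hj) /= => <- <-.
  - by apply: bigcupT_measurable => n; apply: mpre => //; exact: measurable_cells.
exists (\bigcap_N D1 N); split.
- exact: bigcapT_measurable.
- apply/eqP; rewrite eq_le measure_ge0 andbT.
  apply/lee_addgt0Pr => e e0; rewrite add0e.
  pose N := Num.Def.archi_bound e^-1.
  apply: (le_trans _ (le_trans (PD1 N) _)).
    apply: le_measure; rewrite ?inE //; first exact: bigcapT_measurable.
    by move=> w; apply.
  rewrite lee_fin -[leRHS]invrK lef_pV2 ?posrE ?invr_gt0 ?ltr0Sn //.
  apply/ltW/(lt_le_trans (archi_boundP _)); first by rewrite invr_ge0 ltW.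
  by rewrite ler_nat.
- move=> w /= e N _.
  have [n hn] := cells_cover N (Z1 w).
  by exists n => //; split => //=; rewrite -e.
Qed.

Lemma ae_zero_of_small d (T : measurableType d) (R : realType)
  (mu : {measure set T -> \bar R}) (f : T -> R) :
  measurable_fun setT f ->
  (forall eps, 0 < eps -> (\int[mu]_(w in setT) (`|f w|%:E) <= eps%:E)%E) ->
  {ae mu, forall w, f w = 0}.
Proof.
move=> mf h.
have h0 : (\int[mu]_(w in setT) `|(f w)%:E| = 0)%E.
  rewrite (eq_integral (fun w => `|f w|%:E)); last by move=> w _; rewrite abse_EFin.
  apply/eqP; rewrite eq_le integral_ge0 ?andbT //.
  apply/lee_addgt0Pr => e e0; rewrite add0e; exact: h.
have mf' : measurable_fun setT (EFin \o f).
  exact/measurable_realfun.measurable_EFinP.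
have := (ae_eq_integral_abs mu measurableT mf').1 h0.
by apply: filterS => w /(_ I) [].
Qed.

Lemma ae_forall_count d (T : measurableType d) (R : realType)
  (mu : {measure set T -> \bar R}) (C : countType) (Q : C -> T -> Prop) :
  (forall c, {ae mu, forall w, Q c w}) -> {ae mu, forall w, forall c, Q c w}.
Proof.
move=> h.
have H : forall n, {ae mu, forall w, forall c, pickle_inv n = Some c -> Q c w}.
  move=> n; case e: (pickle_inv n) => [c|].
    by apply: filterS (h c) => w Qw c' [<-].
  by apply: filterE => w c'.
have := ae_foralln H.
by apply: filterS => w H' c; exact: (H' (choice.pickle c) c (pickleK_inv c)).
Qed.
Local Open Scope fset_scope.
Theorem proposition4p2 (R : realType) (dm : measure_display) (Omega : measurableType dm)
  (P : probability Omega R) (E : countType)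
  (E_infinite : infinite_set [set: E])
  (* the random virtual permutation sigma *)
  (sigma : Omega -> {fset E} -> E -> E)
  (sigma_vperm : forall w, is_vperm (sigma w))
  (sigma_meas : forall (I : {fset E}) (x y : E), measurable [set w | sigma w I x = y])
  (* central law: each sigma_I has conjugation-invariant law *)
  (sigma_central : forall (I : {fset E}) (tau tau' : E -> E),
      {in I, forall x, tau x \in I} -> {in I, forall x, tau' x \in I} ->
      {in I, cancel tau tau'} -> {in I, cancel tau' tau} ->
      forall pi : E -> E,
      P [set w | {in I, sigma w I =1 pi}] =
      P [set w | {in I, (tau \o sigma w I \o tau') =1 pi}])
  (* lambda(x): L^1 limit of |I cap C_sigma(x)| / |I| as |I| -> oo *)
  (lam : E -> Omega -> R)
  (lam_meas : forall x, measurable_fun [set: Omega] (lam x))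
  (lam_lim : forall (x : E) (eps : R), 0 < eps -> exists N : nat,
      forall I : {fset E}, (N <= #|` I|)%N ->
      (\int[P]_w `|(card_class (sigma w) I x)%:R / (#|` I|)%:R - lam x w|%:E
         <= eps%:E)%E)
  (* Delta(x,y): L^1 limit (on the event x ~ y) of k_I(x,y) / |I| *)
  (Delta : E -> E -> Omega -> R)
  (Delta_meas : forall x y, measurable_fun [set w | vequiv (sigma w) x y] (Delta x y))
  (Delta_lim : forall (x y : E) (eps : R), 0 < eps -> exists N : nat,
      forall I : {fset E}, x \in I -> y \in I -> (N <= #|` I|)%N ->
      (\int[P]_(w in [set w | vequiv (sigma w) x y])
          `|(kI (sigma w) I x y)%:R / (#|` I|)%:R - Delta x y w|%:E <= eps%:E)%E)
  (* the random points X_x in C *)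
  (X : E -> Omega -> nat * R)
  (X_meas : forall x, measurable_fun [set: Omega] (X x))
  (* conditionally on (lambda_k), the X_x are i.i.d. uniform on C *)
  (X_cond_iid_unif : forall (n : nat) (xs : 'I_n -> E), injective xs ->
      forall B : 'I_n -> set (nat * R), (forall i, measurable (B i)) ->
      forall G : set Omega, <<s lam_generators (Lamk sigma lam) >> G ->
      P (G `&` \bigcap_(i in [set: 'I_n]) (X (xs i) @^-1` B i))%classic =
      (\int[P]_(w in G) \prod_(i < n) unifC (Lamk sigma lam w) (B i))%E)
  (X_L : {ae P, forall w, forall x, (X x w).1 = 0%N <-> vfixed (sigma w) x})
  (X_circle : {ae P, forall w, forall x y, x != y ->
      (vequiv (sigma w) x y <-> ((X x w).1 = (X y w).1 /\ (X x w).1 != 0%N)) /\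
      (vequiv (sigma w) x y ->
         lam x w = Lamk sigma lam w (X x w).1 /\ lam y w = Lamk sigma lam w (X x w).1)})
  (X_delta : {ae P, forall w, forall x y, x != y -> vequiv (sigma w) x y ->
      exists m : int, Delta x y w - ((X y w).2 - (X x w).2) = m%:~R * lam x w}) :
  {ae P, forall w,
     bij_isometry (vdist (sigma w) (fun x => lam x w) (fun x y => Delta x y w))
                  (Cdist (Lamk sigma lam w))
                  [set X x w | x in [set: E]] (fun x => X x w)}.

Proof.
have PT : (P setT <= 1)%E by rewrite probability_setT.
have Gsig : <<s lam_generators (Lamk sigma lam) >> setT.
  have [s0 sC _] := @smallest_sigma_algebra _ setT (lam_generators (Lamk sigma lam)).
  by have := sC _ s0; rewrite setD0.
pose g := fun B w => unifC (Lamk sigma lam w) B.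
have h1 : forall x B, measurable B ->
    P (X x @^-1` B) = (\int[P]_(w in setT) g B w)%E.
  move=> x B mB.
  have E1 := X_cond_iid_unif 1%N (fun _ => x) (fun i j _ => etrans (ord1 i) (esym (ord1 j)))
    (fun _ => B) (fun _ => mB) setT Gsig.
  rewrite setTI (eq_integral (fun w => g B w)) in E1; last by move=> w _; rewrite big_ord1.
  rewrite -E1; congr (P _); apply/seteqP; split => w /=.
    by move=> Bw i _.
  by move/(_ ord0 I).
have h2 : forall x y, x != y -> forall B, measurable B ->
    P (X x @^-1` B `&` X y @^-1` B)%classic = (\int[P]_(w in setT) (g B w * g B w))%E.
  move=> x y xy B mB.
  pose xs := fun i : 'I_2 => if i == ord0 then x else y.
  have xsinj : injective xs.
    move=> i j; rewrite /xs.
    case: (eqVneq i ord0) => [->|i0]; case: (eqVneq j ord0) => [->|j0] //.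
    - by move=> e; rewrite e eqxx in xy.
    - by move=> e; rewrite e eqxx in xy.
    - move=> _; apply/val_inj; move: i j i0 j0 => [[|[|i]] Hi] [[|[|j]] Hj] //=.
  have E1 := X_cond_iid_unif 2%N xs xsinj (fun _ => B) (fun _ => mB) setT Gsig.
  rewrite setTI (eq_integral (fun w => g B w * g B w)%E) in E1; last first.
    by move=> w _; rewrite big_ord_recl big_ord1.
  rewrite -E1; congr (P _); apply/seteqP; split => w /=.
    by move=> [Bx By] i _; rewrite /xs; case: ifP.
  by move=> H; split; [exact: (H ord0 I)|exact: (H ord_max I)].
have Hinj : {ae P, forall w, forall p : E * E, p.1 != p.2 -> X p.1 w <> X p.2 w}.
  apply: ae_forall_count => -[x y] /=.
  case: (eqVneq x y) => [->|xy].
    by apply: filterE => w.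
  have neg := @diag_negligible _ Omega R P PT (X x) (X y) g (X_meas x) (X_meas y)
    (fun B w => unifC_ge0 _ _ _) (fun k a b w ab => unifC_cell _ _ _ _ _ ab) (h1 x) (h2 x y xy).
  apply: (negligibleS _ neg) => w /=.
  by apply: contra_notP => ne _; exact: ne.
have HD : {ae P, forall w, forall x, Delta x x w = 0}.
  apply: ae_forall_count => x.
  have vx : forall w, vequiv (sigma w) x x.
    by move=> w; exists [fset x]; split; [rewrite inE|rewrite inE|exists 0%N].
  have ST : [set w | vequiv (sigma w) x x] = setT.
    by apply/seteqP; split => w // _; exact: vx.
  apply: ae_zero_of_small.
    by have := Delta_meas x x; rewrite ST.
  move=> e e0; have [N HN] := Delta_lim x x e e0.
  have [B _ hB] := infinite_set_fset N E_infinite.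
  pose I := x |` B.
  have xI : x \in I by rewrite !inE eqxx.
  have NI : (N <= #|` I|)%N.
    by apply: leq_trans hB _; apply: fsubset_leq_card; apply: fsubsetUr.
  have := HN I xI xI NI; rewrite ST.
  suff -> : (fun w => `|(kI (sigma w) I x x)%:R / (#|` I|)%:R - Delta x x w|%:E)
     = (fun w => `|Delta x x w|%:E) by [].
  apply/funext => w; congr (_%:E).
  have -> : kI (sigma w) I x x = 0%N.
    rewrite /kI; have : (0 < #|` I|)%N by rewrite cardfs_gt0; apply/fset0Pn; exists x.
    by case: #|` I| => [//|m] _ /=; rewrite eqxx.
  by rewrite mul0r sub0r normrN.
move: HD; apply: filter_app; move: Hinj; apply: filter_app.
move: X_delta; apply: filter_app; move: X_circle; apply: filterS.
move=> w hc hd hi h0; split.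
  split.
  - by move=> x _; exists x.
  - move=> a b _ _ e; apply/eqP; apply: contraT => ab.
    by have := hi (a, b) ab e.
  - by move=> _ [x _ <-]; exists x.
move=> x y; rewrite /vdist /Cdist.
case: (eqVneq x y) => [<-|xy].
  rewrite asboolT; last by exists [fset x]; split; [rewrite inE|rewrite inE|exists 0%N].
  rewrite h0 dmod0; case: ifP => [_|]; first by rewrite subrr dmod0.
  by rewrite !eqxx /= => /negbT; rewrite negbK => ->.
case: (pselect (vequiv (sigma w) x y)) => [v|nv].
  rewrite asboolT //.
  have [[hv _] hl] := hc x y xy; have [e1 n0] := hv v; have [l1 _] := hl v.
  have [m hm] := hd x y xy v.
  rewrite {1}e1 eqxx n0 /= -l1.
  have -> : Delta x y w = (((X y w).2 - (X x w).2) + m%:~R * lam x w)%R.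
    by rewrite -hm; ring.
  by rewrite dmod_shift -dmod_opp opprB.
rewrite asboolF //.
case: ifP => [/andP[/eqP e1 n0]|_].
  by exfalso; apply: nv; apply: ((hc x y xy).1).2; split.
case: ifP => [/andP[/eqP exy _]|//].
by exfalso; exact: (hi (x, y) xy exy).
Qed.
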